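(* Let $k\ge1$, $-\frac{\pi}{2}\le\theta_1<\theta_2<\dots<\theta_{k+1}\le\frac{\pi}{2}$ and $\theta_{\min}=\min_{p\ne j}|\theta_p-\theta_j|$. Then for any $\hat\theta_1,\dots,\hat\theta_k\in\mathbb R$, $$\|\eta_{k+1,k}(e^{i\theta_1},\dots,e^{i\theta_{k+1}},e^{i\hat\theta_1},\dots,e^{i\hat\theta_k})\|_\infty\ge\xi(k)\Big(\frac{2\theta_{\min}}{\pi}\Big)^k.$$
   Context: For $z_1,\dots,z_p,\hat z_1,\dots,\hat z_q\in\mathbb C$, $\eta_{p,q}(z_1,\dots,z_p,\hat z_1,\dots,\hat z_q)\in\mathbb R^p$ is the vector whose $j$-th entry is $\prod_{l=1}^q|z_j-\hat z_l|$. For an integer $k\ge1$: $\xi(1)=\frac12$; $\xi(k)=\frac{(\frac{k-1}{2})!(\frac{k-3}{2})!}{4}$ if $k\ge3$ is odd; $\xi(k)=\frac{((\frac{k-2}{2})!)^2}{4}$ if $k$ is even. *)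

(* Defs.v *)
From Stdlib Require Import Reals Lra Lia Arith List.
Open Scope R_scope.

Definition C := (R * R)%type.
Definition Csub (z w : C) : C := (fst z - fst w, snd z - snd w).
Definition Cmod (z : C) : R := sqrt (fst z ^ 2 + snd z ^ 2).
Definition expi (t : R) : C := (cos t, sin t).

Fixpoint prodR (f : nat -> R) (n : nat) : R :=
  match n with
  | O => 1
  | S m => prodR f m * f (S m)
  end.

(* eta_{p,q}(z_1..z_p, zh_1..zh_q) : entry j (1 <= j <= p) is
   prod_{l=1}^q |z_j - zh_l|.  Sequences are indexed from 1. *)
Definition eta (p q : nat) (z zh : nat -> C) (j : nat) : R :=
  prodR (fun l => Cmod (Csub (z j) (zh l))) q.

Definition norm_inf (p : nat) (v : nat -> R) : R :=
  fold_right Rmax 0 (map (fun j => Rabs (v j)) (seq 1 p)).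

Definition xi (k : nat) : R :=
  if Nat.eqb k 1 then 1 / 2
  else if Nat.even k then
    (INR (fact ((k - 2) / 2)))^2 / 4
  else
    INR (fact ((k - 1) / 2)) * INR (fact ((k - 3) / 2)) / 4.

(* Main.v *)
Require Import Defs.
From Stdlib Require Import Reals Lra Lia Arith List Psatz.
From Coquelicot Require Complex.
Open Scope R_scope.

Lemma jordan x : 0 <= x <= PI/2 -> 2 * x / PI <= sin x.
Proof.
  intros [H0 H1].
  pose proof PI_4 as Hp4. pose proof PI2_3_2 as Hp32.
  assert (HP : 0 < PI) by lra.
  assert (Hk : 2 * x / PI = x * (2 / PI)) by (field; lra).
  assert (Hq : 2 / PI <= 2/3).
  { unfold Rdiv. apply Rmult_le_compat_l; [lra|]. apply Rinv_le_contravar; lra. }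
  assert (Hq0 : 0 < 2 / PI) by (apply Rdiv_lt_0_compat; lra).
  rewrite Hk.
  destruct (Rle_dec x (14/10)) as [Hx|Hx].
  - destruct (SIN x H0 ltac:(lra)) as [H _].
    assert (E: sin_lb x = x - x^3/6 + x^5/120 - x^7/5040).
    { unfold sin_lb, sin_approx, sin_term; simpl; field. }
    rewrite E in H.
    apply Rle_trans with (2 := H).
    assert (x^2 <= 196/100) by nra.
    assert (0 <= x^5) by (apply pow_le; lra).
    assert (x^7 <= 42 * x^5).
    { replace (x^7) with (x^2 * x^5) by ring. nra. }
    nra.
  - set (y := PI/2 - x).
    assert (Hy : 0 <= y <= 6/10) by (unfold y; lra).
    replace x with (PI/2 - y) by (unfold y; lra).
    rewrite sin_shift.
    destruct (COS y ltac:(lra) ltac:(lra)) as [H _].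
    assert (E: cos_lb y = 1 - y^2/2 + y^4/24 - y^6/720).
    { unfold cos_lb, cos_approx, cos_term; simpl; field. }
    rewrite E in H.
    apply Rle_trans with (2 := H).
    assert (0 <= y^4) by (apply pow_le; lra).
    assert (y^6 <= y^4).
    { replace (y^6) with (y^2 * y^4) by ring. assert (y^2 <= 1) by nra. nra. }
    assert (Hr : (PI/2 - y) * (2/PI) = 1 - y * (2/PI)) by (field; lra).
    rewrite Hr.
    assert (y * (2/PI) >= y/2) by nra.
    nra.
Qed.


Lemma chord a b : 0 <= b - a <= PI -> 2 * (b - a) / PI <= Defs.Cmod (Csub (expi b) (expi a)).
Proof.
  intros H.
  unfold Defs.Cmod, Csub, expi; simpl.
  set (h := (b - a)/2).
  assert (E : (cos b - cos a) * ((cos b - cos a) * 1) + (sin b - sin a) * ((sin b - sin a) * 1)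
              = (2 * sin h)^2).
  { assert (E1 : cos (b - a) = cos b * cos a + sin b * sin a) by apply cos_minus.
    assert (E2 : cos (2 * h) = 1 - 2 * sin h * sin h) by apply cos_2a_sin.
    replace (2 * h) with (b - a) in E2 by (unfold h; field).
    pose proof (sin2_cos2 a) as Ha. pose proof (sin2_cos2 b) as Hb.
    unfold Rsqr in Ha, Hb. nra. }
  rewrite E.
  assert (Hh : 0 <= h <= PI/2) by (unfold h; lra).
  pose proof (jordan h Hh) as J.
  assert (0 <= sin h) by (apply sin_ge_0; lra).
  rewrite sqrt_pow2 by lra.
  assert (2 * (b - a) / PI = 2 * (2 * h / PI)) by (unfold h; field; pose proof PI_RGT_0; lra).
  lra.
Qed.


Module Alg.
Import Complex.
Local Open Scope C_scope.

Definition prodL (x : C) (ys : list C) : C := fold_right (fun y acc => (x - y) * acc) (RtoC 1) ys.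

Fixpoint L (xs : list C) (f : C -> C) : C :=
  match xs with
  | nil => RtoC 0
  | x :: rest => f x / prodL x rest + L rest (fun y => f y / (y - x))
  end.

Lemma L_ext xs : forall f g, (forall y, In y xs -> f y = g y) -> L xs f = L xs g.
Proof.
  induction xs as [|x rest IH]; intros f g H; simpl; auto.
  rewrite (H x) by (simpl; auto).
  rewrite (IH (fun y => f y / (y - x)) (fun y => g y / (y - x))); auto.
  intros y Hy; rewrite H; simpl; auto.
Qed.

Lemma L_lin xs : forall f g c, L xs (fun y => f y + c * g y) = L xs f + c * L xs g.
Proof.
  induction xs as [|x rest IH]; intros f g c; simpl.
  - ring.
  - rewrite (L_ext rest (fun y => (f y + c * g y) / (y - x))
                 (fun y => f y / (y - x) + c * (g y / (y - x)))).
    + rewrite IH. unfold Cdiv. ring.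
    + intros y _. unfold Cdiv. ring.
Qed.

Lemma sub_nz (x y : C) : x <> y -> x - y <> RtoC 0.
Proof. intros H E. apply H. replace x with ((x - y) + y) by ring. rewrite E. ring. Qed.

Lemma mult_nz (a b : C) : a <> RtoC 0 -> b <> RtoC 0 -> a * b <> RtoC 0.
Proof.
  intros Ha Hb E. apply Hb. replace b with (/ a * (a * b)) by (field; auto).
  rewrite E. ring.
Qed.

Lemma prodL_nz x rest : ~ In x rest -> prodL x rest <> RtoC 0.
Proof.
  induction rest as [|y r IH]; simpl; intros H.
  - intros E. apply (f_equal fst) in E. simpl in E. lra.
  - apply mult_nz.
    + apply (sub_nz x y); auto.
    + apply IH; auto.
Qed.

Lemma L_rec x rest g w : NoDup (x :: rest) ->
  L (x :: rest) (fun y => g y * (y - w)) = L rest g + (x - w) * L (x :: rest) g.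
Proof.
  intros Hnd. inversion Hnd; subst. simpl.
  rewrite (L_ext rest (fun y => g y * (y - w) / (y - x))
                 (fun y => g y + (x - w) * (g y / (y - x)))).
  - rewrite L_lin. unfold Cdiv. ring.
  - intros y Hy. assert (y - x <> RtoC 0) by (apply sub_nz; intros ->; auto).
    field. auto.
Qed.

Lemma L_one : forall rest x, NoDup (x :: rest) ->
  L (x :: rest) (fun _ => RtoC 1) = match rest with nil => RtoC 1 | _ => RtoC 0 end.
Proof.
  induction rest as [|y r IH]; intros x Hnd.
  - simpl. field.
  - assert (Hxy : x <> y) by (inversion Hnd; subst; intros ->; simpl in *; auto).
    assert (Hnd2 : NoDup (x :: r)).
    { inversion Hnd; subst. inversion H2; subst. constructor; auto. simpl in H1; auto. }
    assert (Hnd3 : NoDup (y :: r)) by (inversion Hnd; auto).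
    pose proof (L_rec x (y :: r) (fun _ => RtoC 1) y Hnd) as R.
    assert (E : L (x :: y :: r) (fun z => RtoC 1 * (z - y)) = L (x :: r) (fun _ => RtoC 1)).
    { simpl.
      assert (Hp : prodL x r <> RtoC 0) by (apply prodL_nz; inversion Hnd2; auto).
      assert (Hp2 : x - y <> RtoC 0) by (apply sub_nz; auto).
      rewrite (L_ext r (fun y0 => RtoC 1 * (y0 - y) / (y0 - x) / (y0 - y)) (fun y0 => RtoC 1 / (y0 - x))).
      - replace (RtoC 1 * (y - y) / (y - x) / prodL y r) with (RtoC 0) by (unfold Cdiv; ring).
        field. split; auto.
      - intros z Hz. assert (z - y <> RtoC 0) by (apply sub_nz; intros ->; inversion Hnd3; auto).
        assert (z - x <> RtoC 0) by (apply sub_nz; intros ->; inversion Hnd2; auto).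
        field. split; auto. }
    cbv beta in R. rewrite E in R. rewrite (IH x Hnd2), (IH y Hnd3) in R.
    set (Lv := L (x :: y :: r) (fun _ => RtoC 1)) in *.
    set (V := match r with nil => RtoC 1 | _ => RtoC 0 end) in *.
    assert (Z : (x - y) * Lv = RtoC 0).
    { replace ((x - y) * Lv) with ((V + (x - y) * Lv) - V) by ring.
      rewrite <- R. ring. }
    assert (Hp2 : x - y <> RtoC 0) by (apply sub_nz; auto).
    replace Lv with (/ (x - y) * ((x - y) * Lv)) by (field; auto).
    rewrite Z. ring.
Qed.

Fixpoint CprodR (f : nat -> C) (n : nat) : C :=
  match n with O => RtoC 1 | S m => CprodR f m * f (S m) end.

Lemma L_poly (w : nat -> C) : forall m xs, NoDup xs -> (m < length xs)%nat ->
  L xs (fun z => CprodR (fun l => z - w l) m) =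
  if Nat.eqb (S m) (length xs) then RtoC 1 else RtoC 0.
Proof.
  induction m as [|m IH]; intros xs Hnd Hlen.
  - destruct xs as [|x rest]; simpl in Hlen; [lia|].
    simpl CprodR. rewrite L_one by auto.
    destruct rest; simpl; auto.
  - destruct xs as [|x rest]; simpl in Hlen; [lia|].
    change (L (x :: rest) (fun z => CprodR (fun l => z - w l) m * (z - w (S m))) =
      (if Nat.eqb (S (S m)) (length (x :: rest)) then RtoC 1 else RtoC 0)).
    rewrite L_rec by auto.
    assert (Hnd' : NoDup rest) by (inversion Hnd; auto).
    rewrite (IH rest Hnd') by lia.
    rewrite (IH (x :: rest) Hnd) by (simpl; lia).
    simpl length.
    replace (Nat.eqb (S m) (S (length rest))) with false
      by (symmetry; apply Nat.eqb_neq; lia).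
    destruct (Nat.eqb (S m) (length rest)) eqn:E;
    destruct (Nat.eqb (S (S m)) (S (length rest))) eqn:E2; try ring;
    apply Nat.eqb_eq in E || apply Nat.eqb_neq in E;
    apply Nat.eqb_eq in E2 || apply Nat.eqb_neq in E2; lia.
Qed.

Definition prodM (x : C) (ys : list C) : R :=
  fold_right (fun y acc => Rmult (Cmod (x - y)) acc) 1%R ys.

Fixpoint LR (xs : list C) (g : C -> R) : R :=
  match xs with
  | nil => 0%R
  | x :: rest => (g x / prodM x rest + LR rest (fun y => g y / Cmod (y - x)))%R
  end.

Lemma Cmod_prodL x rest : Cmod (prodL x rest) = prodM x rest.
Proof.
  induction rest as [|y r IH]; simpl.
  - apply Cmod_1.
  - rewrite Cmod_mult, IH. reflexivity.
Qed.

Lemma prodM_pos x rest : ~ In x rest -> (0 < prodM x rest)%R.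
Proof.
  intros H. rewrite <- Cmod_prodL.
  pose proof (Cmod_ge_0 (prodL x rest)).
  destruct (Rle_lt_or_eq_dec _ _ H0); auto.
  exfalso. apply (prodL_nz x rest H). apply Cmod_eq_0. auto.
Qed.

Lemma L_bound xs : forall f g, NoDup xs -> (forall y, In y xs -> (Cmod (f y) <= g y)%R) ->
  (Cmod (L xs f) <= LR xs g)%R.
Proof.
  induction xs as [|x rest IH]; intros f g Hnd H; simpl.
  - rewrite Cmod_0. lra.
  - inversion Hnd; subst.
    eapply Rle_trans; [apply Cmod_triangle|].
    apply Rplus_le_compat.
    + rewrite Cmod_div by (apply prodL_nz; auto).
      rewrite Cmod_prodL.
      pose proof (prodM_pos x rest H2).
      unfold Rdiv. apply Rmult_le_compat_r.
      * left. apply Rinv_0_lt_compat. auto.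
      * apply H. simpl. auto.
    + apply IH; auto.
      intros y Hy.
      assert (Hyx : y - x <> RtoC 0) by (apply sub_nz; intros ->; auto).
      rewrite Cmod_div by auto.
      assert (0 < Cmod (y - x))%R.
      { pose proof (Cmod_ge_0 (y - x)).
        destruct (Rle_lt_or_eq_dec _ _ H0); auto.
        exfalso. apply Hyx. apply Cmod_eq_0. auto. }
      unfold Rdiv. apply Rmult_le_compat_r.
      * left. apply Rinv_0_lt_compat. auto.
      * apply H. simpl. auto.
Qed.
Lemma Cminus_swap a b : a - b = Copp (b - a).
Proof. ring. Qed.
Lemma Cminus_self a : a - a = RtoC 0.
Proof. ring. Qed.
End Alg.


Module Bnd.
Import Complex.
Import Alg.

Lemma prodM_app x l y : prodM x (l ++ y :: nil) = prodM x l * Cmod (Cminus x y).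
Proof.
  induction l as [|u l IH]; simpl.
  - unfold prodM; simpl. ring.
  - unfold prodM in *; simpl. rewrite IH. ring.
Qed.

Section S.
Variable z : nat -> C.
Variable N : nat.
Variable d : R.
Hypothesis hd : 0 < d.
Hypothesis sep : forall i j, (1 <= i)%nat -> (i < j)%nat -> (j <= N)%nat ->
  d * INR (j - i) <= Cmod (Cminus (z i) (z j)) /\ d * INR (j - i) <= Cmod (Cminus (z j) (z i)).

Lemma prodM_lb a c : (1 <= a)%nat -> (a + c <= N)%nat ->
  d ^ c * INR (fact c) <= prodM (z a) (map z (seq (S a) c)).
Proof.
  intros Ha. induction c as [|c IH]; intros Hc.
  - simpl. unfold prodM; simpl. lra.
  - rewrite seq_S, map_app. simpl map at 2. rewrite prodM_app.
    specialize (IH ltac:(lia)).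
    destruct (sep a (S a + c) Ha ltac:(lia) ltac:(lia)) as [S1 _].
    replace (S a + c - a)%nat with (S c) in S1 by lia.
    rewrite fact_simpl, mult_INR. simpl pow.
    assert (0 <= d ^ c * INR (fact c)).
    { apply Rmult_le_pos. apply pow_le; lra. apply pos_INR. }
    assert (0 <= d * INR (S c)) by (apply Rmult_le_pos; [lra | apply pos_INR]).
    replace (d * d ^ c * (INR (S c) * INR (fact c))) with ((d ^ c * INR (fact c)) * (d * INR (S c))) by ring.
    apply Rmult_le_compat; auto.
Qed.

Fixpoint sumR (f : nat -> R) (a c : nat) : R :=
  match c with O => 0 | S c => f a + sumR f (S a) c end.

Variable M : R.
Hypothesis hM : 0 <= M.

Definition T (j : nat) : R := M / (d ^ (N - 1) * INR (fact (j - 1)) * INR (fact (N - j))).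

Lemma INR_fact_pos n : 0 < INR (fact n).
Proof. apply lt_0_INR. apply lt_O_fact. Qed.

Lemma LR_bound : forall c a g, (1 <= a)%nat -> (a + c = S N)%nat ->
  (forall j, (a <= j <= N)%nat -> 0 <= g (z j) <=
      M * INR (fact (j - a)) / (d ^ (a - 1) * INR (fact (j - 1)))) ->
  LR (map z (seq a c)) g <= sumR T a c.
Proof.
  induction c as [|c IH]; intros a g Ha Hac Hg.
  - simpl. lra.
  - simpl map. simpl LR. simpl sumR.
    apply Rplus_le_compat.
    + destruct (Hg a ltac:(lia)) as [G0 G1].
      replace (a - a)%nat with 0%nat in G1 by lia.
      pose proof (prodM_lb a c Ha ltac:(lia)) as P.
      assert (Pp : 0 < d ^ c * INR (fact c)).
      { apply Rmult_lt_0_compat. apply pow_lt; lra. apply INR_fact_pos. }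
      unfold T.
      replace (N - 1)%nat with ((a - 1) + c)%nat by lia.
      replace (N - a)%nat with c by lia.
      rewrite pow_add.
      assert (0 < d ^ (a - 1)) by (apply pow_lt; lra).
      pose proof (INR_fact_pos (a - 1)).
      simpl fact in G1. simpl INR in G1.
      apply Rle_trans with ((M * 1 / (d ^ (a - 1) * INR (fact (a - 1)))) / (d ^ c * INR (fact c))).
      * unfold Rdiv. apply Rmult_le_compat; auto.
        -- left. apply Rinv_0_lt_compat. lra.
        -- apply Rinv_le_contravar; auto.
      * assert (0 < d ^ c) by (apply pow_lt; lra).
        pose proof (INR_fact_pos c).
        right. field. repeat split; lra.
    + apply IH; [lia | lia |].
      intros j Hj.
      destruct (Hg j ltac:(lia)) as [G0 G1].
      destruct (sep a j Ha ltac:(lia) ltac:(lia)) as [_ S2].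
      assert (Hdj : 0 < d * INR (j - a)).
      { apply Rmult_lt_0_compat; auto. apply lt_0_INR. lia. }
      assert (Hc : 0 < Cmod (Cminus (z j) (z a))) by lra.
      split.
      * unfold Rdiv. apply Rmult_le_pos; auto. left. apply Rinv_0_lt_compat; auto.
      * replace (j - a)%nat with (S (j - S a)) in G1, S2, Hdj by lia.
        rewrite fact_simpl, mult_INR in G1.
        replace (S a - 1)%nat with (S (a - 1)) by lia.
        simpl pow.
        assert (0 < d ^ (a - 1)) by (apply pow_lt; lra).
        pose proof (INR_fact_pos (j - 1)).
        pose proof (INR_fact_pos (j - S a)).
        apply Rle_trans with ((M * (INR (S (j - S a)) * INR (fact (j - S a))) /
              (d ^ (a - 1) * INR (fact (j - 1)))) / (d * INR (S (j - S a)))).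
        -- unfold Rdiv. apply Rmult_le_compat; auto.
           ++ left. apply Rinv_0_lt_compat. lra.
           ++ apply Rinv_le_contravar; auto.
        -- right. field. repeat split; try lra.
           apply Rgt_not_eq. apply lt_0_INR. lia.
Qed.
End S.
End Bnd.


Lemma sumR_f0 f : forall c a, Bnd.sumR f a (S c) = sum_f_R0 (fun i => f (a + i)%nat) c.
Proof.
  induction c as [|c IH]; intros a.
  - simpl. rewrite Nat.add_0_r. ring.
  - change (Bnd.sumR f a (S (S c))) with (f a + Bnd.sumR f (S a) (S c)).
    rewrite IH. rewrite (decomp_sum _ (S c)) by lia. simpl pred.
    rewrite Nat.add_0_r. f_equal. apply sum_eq. intros i _. f_equal. lia.
Qed.

Lemma sum_T k d M : 0 < d ->
  Bnd.sumR (Bnd.T (S k) d M) 1 (S k) = M / d ^ k * 2 ^ k / INR (fact k).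
Proof.
  intros hd. rewrite sumR_f0.
  assert (0 < d ^ k) by (apply pow_lt; lra).
  assert (0 < INR (fact k)) by (apply lt_0_INR, lt_O_fact).
  rewrite (sum_eq _ (fun i => Binomial.C k i * 1 ^ i * 1 ^ (k - i) * (M / (d ^ k * INR (fact k))))).
  - rewrite <- scal_sum. rewrite <- Binomial.binomial.
    replace (1 + 1) with 2 by ring. field. lra.
  - intros i Hi. unfold Bnd.T, Binomial.C.
    replace (S k - 1)%nat with k by lia.
    replace (1 + i - 1)%nat with i by lia.
    replace (S k - (1 + i))%nat with (k - i)%nat by lia.
    rewrite !pow1.
    assert (0 < INR (fact i)) by (apply lt_0_INR, lt_O_fact).
    assert (0 < INR (fact (k - i))) by (apply lt_0_INR, lt_O_fact).
    field. repeat split; lra.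
Qed.

Lemma even_nat m : (fact m * fact m * 4 ^ m <= fact (2 * m + 2))%nat.
Proof.
  induction m as [|m IH].
  - simpl. lia.
  - replace (2 * S m + 2)%nat with (S (S (2 * m + 2))) by lia.
    rewrite !fact_simpl. rewrite Nat.pow_succ_r'.
    nia.
Qed.

Lemma odd_nat m : (fact (S m) * fact m * 2 ^ (2 * m + 1) <= fact (2 * m + 3))%nat.
Proof.
  induction m as [|m IH].
  - simpl. lia.
  - replace (2 * S m + 3)%nat with (S (S (2 * m + 3))) by lia.
    replace (2 * S m + 1)%nat with (S (S (2 * m + 1))) by lia.
    rewrite (fact_simpl (S m)), (fact_simpl (S (2 * m + 3))), (fact_simpl (2 * m + 3)).
    pose proof (fact_simpl m) as HA.
    rewrite !Nat.pow_succ_r'.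
    set (A := fact (S m)) in *. set (B := fact m) in *.
    set (P := 2 ^ (2 * m + 1)) in *. set (F := fact (2 * m + 3)) in *.
    rewrite HA at 2.
    nia.
Qed.

Lemma even_2m m : Nat.even (2 * m) = true.
Proof.
  induction m as [|m IH]; auto.
  replace (2 * S m)%nat with (S (S (2 * m))) by lia. simpl. auto.
Qed.

Lemma xi_bound k : (1 <= k)%nat -> xi k * 2 ^ k <= INR (fact k).
Proof.
  intros hk. unfold xi.
  destruct (Nat.eqb k 1) eqn:E1.
  { apply Nat.eqb_eq in E1. subst. simpl. lra. }
  apply Nat.eqb_neq in E1.
  destruct (Nat.even k) eqn:E2.
  - destruct (Nat.Even_or_Odd k) as [[m Hm]|[m Hm]].
    2:{ subst k. replace (2 * m + 1)%nat with (S (2 * m)) in E2 by lia.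
        rewrite Nat.even_succ, <- Nat.negb_even, even_2m in E2. discriminate. }
    destruct m as [|m]; [lia|].
    subst k. replace (2 * S m - 2)%nat with (m * 2)%nat by lia.
    rewrite Nat.div_mul by lia.
    pose proof (even_nat m) as H. apply le_INR in H.
    rewrite !mult_INR, pow_INR in H.
    replace (2 * m + 2)%nat with (2 * S m)%nat in H by lia.
    replace (2 ^ (2 * S m)) with (4 * 4 ^ m).
    + replace (INR 4) with 4 in H by (simpl; ring).
      replace (INR (fact m) ^ 2 / 4 * (4 * 4 ^ m)) with (INR (fact m) * INR (fact m) * 4 ^ m) by field.
      exact H.
    + rewrite pow_mult. replace (2^2) with 4 by ring. reflexivity.
  - destruct (Nat.Even_or_Odd k) as [[m Hm]|[m Hm]].
    { subst k. rewrite even_2m in E2. discriminate. }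
    destruct m as [|m]; [lia|].
    subst k. replace (2 * S m + 1 - 1)%nat with (S m * 2)%nat by lia.
    replace (2 * S m + 1 - 3)%nat with (m * 2)%nat by lia.
    rewrite !Nat.div_mul by lia.
    pose proof (odd_nat m) as H. apply le_INR in H.
    rewrite !mult_INR, pow_INR in H.
    replace (2 * m + 3)%nat with (2 * S m + 1)%nat in H by lia.
    replace (2 ^ (2 * S m + 1)) with (4 * 2 ^ (2 * m + 1)).
    + replace (INR 2) with 2 in H by (simpl; ring).
      replace (INR (fact (S m)) * INR (fact m) / 4 * (4 * 2 ^ (2 * m + 1))) with
        (INR (fact (S m)) * INR (fact m) * 2 ^ (2 * m + 1)) by field.
      exact H.
    + replace (2 * S m + 1)%nat with (2 + (2 * m + 1))%nat by lia.
      rewrite (pow_add 2 2 (2 * m + 1)). replace (2^2) with 4 by ring. reflexivity.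
Qed.


Lemma fold_max x l : In x l -> x <= fold_right Rmax 0 l.
Proof.
  induction l as [|y l IH]; simpl; [tauto|].
  intros [->|H]. apply Rmax_l. eapply Rle_trans; [apply IH; auto | apply Rmax_r].
Qed.

Lemma fold_max_nn l : 0 <= fold_right Rmax 0 l.
Proof.
  induction l as [|y l IH]; simpl; [lra|]. eapply Rle_trans; [apply IH | apply Rmax_r].
Qed.

Lemma norm_inf_ge p v j : (1 <= j <= p)%nat -> Rabs (v j) <= norm_inf p v.
Proof.
  intros H. unfold norm_inf. apply fold_max. apply in_map_iff. exists j. split; auto.
  apply in_seq. lia.
Qed.

Lemma Cmod_eq a b : Defs.Cmod (Csub a b) = Complex.Cmod (Complex.Cminus a b).
Proof. reflexivity. Qed.

Lemma eta_eq x w k : prodR (fun l => Defs.Cmod (Csub x (w l))) k =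
  Complex.Cmod (Alg.CprodR (fun l => Complex.Cminus x (w l)) k).
Proof.
  induction k as [|k IH]; simpl.
  - rewrite Complex.Cmod_1. reflexivity.
  - rewrite Complex.Cmod_mult, IH, Cmod_eq. reflexivity.
Qed.

Lemma nodup_map_seq (z : nat -> Complex.C) : forall c a,
  (forall i j, (a <= i)%nat -> (i < j)%nat -> (j < a + c)%nat -> z i <> z j) ->
  NoDup (map z (seq a c)).
Proof.
  induction c as [|c IH]; intros a H; simpl; constructor.
  - intros Hin. apply in_map_iff in Hin. destruct Hin as [j [Ej Hj]].
    apply in_seq in Hj. apply (H a j); auto; lia.
  - apply IH. intros i j Hi Hij Hj. apply H; lia.
Qed.

Theorem corollary3p1 (k : nat) (hk : (1 <= k)%nat)
  (theta : nat -> R) (theta_hat : nat -> R) (theta_min : R)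
  (hlo : - (PI / 2) <= theta 1%nat)
  (hhi : theta (S k) <= PI / 2)
  (hinc : forall j : nat, (1 <= j <= k)%nat -> theta j < theta (S j))
  (hmin_attained : exists p j : nat,
      (1 <= p <= S k)%nat /\ (1 <= j <= S k)%nat /\ p <> j /\
      theta_min = Rabs (theta p - theta j))
  (hmin_lower : forall p j : nat,
      (1 <= p <= S k)%nat -> (1 <= j <= S k)%nat -> p <> j ->
      theta_min <= Rabs (theta p - theta j)) :
  norm_inf (S k)
    (eta (S k) k (fun j => expi (theta j)) (fun l => expi (theta_hat l)))
  >= xi k * (2 * theta_min / PI) ^ k.
Proof.
  pose proof PI_RGT_0 as HPI.
  assert (Htm0 : 0 <= theta_min).
  { destruct hmin_attained as [p [j [_ [_ [_ ->]]]]]. apply Rabs_pos. }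
  set (M := norm_inf (S k) (eta (S k) k (fun j => expi (theta j)) (fun l => expi (theta_hat l)))).
  assert (HM0 : 0 <= M) by apply fold_max_nn.
  destruct (Req_dec theta_min 0) as [Hz|Hpos].
  { rewrite Hz. replace (2 * 0 / PI) with 0 by (field; lra).
    rewrite pow_i by lia. lra. }
  assert (Htm : 0 < theta_min) by lra.
  set (d := 2 * theta_min / PI).
  assert (hd : 0 < d) by (unfold d; apply Rdiv_lt_0_compat; lra).
  assert (gap : forall t i, (1 <= i)%nat -> (i + t <= S k)%nat ->
             INR t * theta_min <= theta (i + t)%nat - theta i).
  { induction t as [|t IH]; intros i Hi Ht.
    - rewrite Nat.add_0_r. simpl. lra.
    - specialize (IH i Hi ltac:(lia)).
      pose proof (hmin_lower (i + S t)%nat (i + t)%nat ltac:(lia) ltac:(lia) ltac:(lia)) as H1.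
      replace (i + S t)%nat with (S (i + t)) in * by lia.
      pose proof (hinc (i + t)%nat ltac:(lia)).
      rewrite Rabs_right in H1 by lra.
      rewrite S_INR. lra. }
  set (z := fun j => expi (theta j)).
  set (w := fun l => expi (theta_hat l)).
  assert (sep : forall i j, (1 <= i)%nat -> (i < j)%nat -> (j <= S k)%nat ->
    d * INR (j - i) <= Complex.Cmod (Complex.Cminus (z i) (z j)) /\
    d * INR (j - i) <= Complex.Cmod (Complex.Cminus (z j) (z i))).
  { intros i j Hi Hij Hj.
    pose proof (gap (j - i)%nat i Hi ltac:(lia)) as G.
    replace (i + (j - i))%nat with j in G by lia.
    pose proof (gap (i - 1)%nat 1%nat ltac:(lia) ltac:(lia)) as G1.
    replace (1 + (i - 1))%nat with i in G1 by lia.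
    pose proof (gap (S k - j)%nat j ltac:(lia) ltac:(lia)) as G2.
    replace (j + (S k - j))%nat with (S k) in G2 by lia.
    pose proof (pos_INR (i - 1)). pose proof (pos_INR (S k - j)).
    pose proof (pos_INR (j - i)).
    assert (0 <= INR (i - 1) * theta_min) by nra.
    assert (0 <= INR (S k - j) * theta_min) by nra.
    assert (0 <= INR (j - i) * theta_min) by nra.
    pose proof (chord (theta i) (theta j) ltac:(split; lra)) as Ch.
    rewrite Cmod_eq in Ch.
    assert (Hle : d * INR (j - i) <= 2 * (theta j - theta i) / PI).
    { unfold d. unfold Rdiv. 
      replace (2 * theta_min * / PI * INR (j - i)) with ((2 * / PI) * (INR (j - i) * theta_min)) by ring.
      replace (2 * (theta j - theta i) * / PI) with ((2 * / PI) * (theta j - theta i)) by ring.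
      apply Rmult_le_compat_l; [|lra]. left. apply Rmult_lt_0_compat; [lra|]. apply Rinv_0_lt_compat; lra. }
    split.
    - rewrite Alg.Cminus_swap.
      rewrite Complex.Cmod_opp. unfold z. lra.
    - unfold z. lra. }
  set (xs := map z (seq 1 (S k))).
  assert (Hnd : NoDup xs).
  { apply nodup_map_seq. intros i j Hi Hij Hj E.
    destruct (sep i j Hi Hij ltac:(lia)) as [S1 _].
    rewrite E in S1.
    rewrite Alg.Cminus_self in S1.
    rewrite Complex.Cmod_0 in S1.
    assert (0 < INR (j - i)) by (apply lt_0_INR; lia). nra. }
  set (P := fun y => Alg.CprodR (fun l => Complex.Cminus y (w l)) k).
  assert (HL : Alg.L xs P = Complex.RtoC 1).
  { unfold P. rewrite Alg.L_poly; auto.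
    - unfold xs. rewrite length_map, length_seq. rewrite Nat.eqb_refl. reflexivity.
    - unfold xs. rewrite length_map, length_seq. lia. }
  pose proof (Alg.L_bound xs P (fun y => Complex.Cmod (P y)) Hnd ltac:(intros; lra)) as B1.
  rewrite HL, Complex.Cmod_1 in B1.
  pose proof (Bnd.LR_bound z (S k) d hd sep M (S k) 1%nat (fun y => Complex.Cmod (P y))
               ltac:(lia) ltac:(lia)) as B2.
  assert (B3 : Alg.LR xs (fun y => Complex.Cmod (P y)) <= Bnd.sumR (Bnd.T (S k) d M) 1 (S k)).
  { apply B2. intros j Hj. split; [apply Complex.Cmod_ge_0|].
    replace (1 - 1)%nat with 0%nat by lia. simpl pow.
    assert (0 < INR (fact (j - 1))) by (apply lt_0_INR, lt_O_fact).
    replace (M * INR (fact (j - 1)) / (1 * INR (fact (j - 1)))) with M by (field; lra).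
    pose proof (norm_inf_ge (S k) (eta (S k) k (fun j => expi (theta j)) (fun l => expi (theta_hat l))) j Hj) as NI.
    fold M in NI. unfold eta in NI. rewrite eta_eq in NI.
    pose proof (Rle_abs (Complex.Cmod (Alg.CprodR (fun l : nat => Complex.Cminus (expi (theta j)) (expi (theta_hat l))) k))).
    unfold P, w, z. lra. }
  rewrite sum_T in B3 by auto.
  pose proof (xi_bound k hk) as X.
  assert (A : 0 < d ^ k) by (apply pow_lt; lra).
  assert (Bp : 0 < 2 ^ k) by (apply pow_lt; lra).
  assert (F : 0 < INR (fact k)) by (apply lt_0_INR, lt_O_fact).
  assert (H1 : 1 <= M / d ^ k * 2 ^ k / INR (fact k)) by lra.
  assert (H2 : d ^ k * INR (fact k) <= M * 2 ^ k).
  { apply (Rmult_le_compat_r (d ^ k * INR (fact k))) in H1; [|nra].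
    replace (M / d ^ k * 2 ^ k / INR (fact k) * (d ^ k * INR (fact k))) with (M * 2 ^ k) in H1 by (field; lra).
    lra. }
  fold d. apply Rle_ge.
  apply Rmult_le_reg_r with (2 ^ k); auto.
  apply Rle_trans with (d ^ k * INR (fact k)); [|exact H2].
  replace (xi k * d ^ k * 2 ^ k) with (d ^ k * (xi k * 2 ^ k)) by ring.
  apply Rmult_le_compat_l; lra.
Qed.
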